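(* Assume Assumption 1, Assumption 2 and the null hypothesis $H_0:\ T_i(1)=T_i(0)$ for all $i$, and condition on $\boldsymbol{T}(1),\boldsymbol{T}(0)$. Then for each $1\le k\le K$, conditional on $N_k$, the variables $D_k$ and $N_{1k}$ are independent, and $$D_k\mid\boldsymbol{T}(1),\boldsymbol{T}(0),N_k\sim\mathrm{HGeom}(n_k,d_k,N_k),\qquad N_{1k}\mid\boldsymbol{T}(1),\boldsymbol{T}(0),N_k\sim\mathrm{Bin}(N_k,\phi_k).$$
   Context: There are $n$ units. Unit $i$ has potential event times $T_i(1),T_i(0)\ge 0$, potential censoring times $C_i(1),C_i(0)\in[0,\infty]$, and treatment indicator $Z_i\in\{0,1\}$; bold letters denote $n$-vectors. Assumption 1: conditional on $\boldsymbol{T}(1),\boldsymbol{T}(0),\boldsymbol{C}(1),\boldsymbol{C}(0)$, the $Z_i$ are i.i.d. Bernoulli$(p_1)$, $p_1=1-p_0\in(0,1)$. Assumption 2: $(\boldsymbol{C}(1),\boldsymbol{C}(0))$ is independent of $(\boldsymbol{T}(1),\boldsymbol{T}(0))$ and the pairs $(C_i(1),C_i(0))$ are i.i.d. across $i$. $G_z(c)=\Pr(C_i(z)\ge c)$, $G(t)=p_1G_1(t)+p_0G_0(t)$. Realized: $W_i=\min\{T_i,C_i\}$, $\Delta_i=\mathbb{1}(T_i\le C_i)$ with $T_i=Z_iT_i(1)+(1-Z_i)T_i(0)$, $C_i=Z_iC_i(1)+(1-Z_i)C_i(0)$. Let $t_1<\dots<t_K$ be the distinct values of $\{T_i(0)\}$,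 $d_k=\#\{i:T_i(0)=t_k\}$, $n_k=\#\{i:T_i(0)\ge t_k\}$, $\phi_k=p_1G_1(t_k)/G(t_k)$; $N_{1k}=\sum_iZ_i\mathbb{1}(W_i\ge t_k)$, $N_k=\sum_i\mathbb{1}(W_i\ge t_k)$, $D_k=\sum_i\Delta_i\mathbb{1}(W_i=t_k)$. $\mathrm{HGeom}(m,k,b)$: number of successes in $b$ draws without replacement from $m$ items containing $k$ successes; $\mathrm{Bin}(m,p)$: binomial. *)

(* Defs.v *)
From HB Require Import structures.
From mathcomp Require Import all_boot all_order all_algebra.
From mathcomp Require Import all_classical all_reals all_analysis measurable_realfun.
From mathcomp Require Export binomial_distribution.
Set Implicit Arguments. Unset Strict Implicit. Unset Printing Implicit Defensive.
Import Order.TTheory GRing.Theory Num.Theory.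
Local Open Scope classical_set_scope.
Local Open Scope ring_scope.

(* Hypergeometric pmf HGeom(m,k,b): number of successes in b draws without
   replacement from m items containing k successes. *)
Definition hgeom_pmf {R : realType} (m k b a : nat) : R :=
  if (a <= b)%N then ('C(k, a) * 'C(m - k, b - a))%:R / ('C(m, b))%:R else 0.

Definition event_times {R : realType} (n : nat) (T0 : 'I_n -> R) : seq R :=
  sort <=%R (undup [seq T0 i | i <- enum 'I_n]).

Definition nK {R : realType} (n : nat) (T0 : 'I_n -> R) : nat := size (event_times T0).
Definition tk {R : realType} (n : nat) (T0 : 'I_n -> R) (k : nat) : R :=
  nth 0 (event_times T0) k.
Definition dk {R : realType} (n : nat) (T0 : 'I_n -> R) (k : nat) : nat :=
  #|[set i : 'I_n | T0 i == tk T0 k]|.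
Definition nk {R : realType} (n : nat) (T0 : 'I_n -> R) (k : nat) : nat :=
  #|[set i : 'I_n | tk T0 k <= T0 i]|.

Section realized.
Context {R : realType} {Omega : Type} (n : nat)
  (T1 T0 : 'I_n -> R) (Z : 'I_n -> Omega -> bool) (C1 C0 : 'I_n -> Omega -> \bar R).
Definition Tobs (i : 'I_n) (w : Omega) : R := if Z i w then T1 i else T0 i.
Definition Cobs (i : 'I_n) (w : Omega) : \bar R := if Z i w then C1 i w else C0 i w.
Definition Wobs (i : 'I_n) (w : Omega) : \bar R := Order.min (Tobs i w)%:E (Cobs i w).
Definition Delta (i : 'I_n) (w : Omega) : bool := ((Tobs i w)%:E <= Cobs i w)%E.
Definition N1 (t : R) (w : Omega) : nat := #|[set i : 'I_n | Z i w && (t%:E <= Wobs i w)%E]|.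
Definition Nall (t : R) (w : Omega) : nat := #|[set i : 'I_n | (t%:E <= Wobs i w)%E]|.
Definition Dnum (t : R) (w : Omega) : nat :=
  #|[set i : 'I_n | Delta i w && (Wobs i w == t%:E)]|.
End realized.

(* Main.v *)
Require Import Defs.
From HB Require Import structures.
From mathcomp Require Import all_boot all_order all_algebra ring lra zify.
From mathcomp Require Import all_classical all_reals all_analysis measurable_realfun.
Import Order.TTheory GRing.Theory Num.Theory.
Set Implicit Arguments. Unset Strict Implicit.
Local Open Scope classical_set_scope.
Local Open Scope ring_scope.

Section CombS.
Local Close Scope classical_set_scope.

Lemma prod_if1 (K : comPzRingType) (I : finType) (A : {set I}) (x : K) :
  \prod_i (if i \in A then x else 1) = x ^+ #|A|.
Proof. by rewrite -big_mkcond prodr_const. Qed.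

Lemma prod_nested (K : comPzRingType) (I : finType) (Y S Rs : {set I}) (a b c : K) :
 \prod_i (if i \in Y then (if (i \in S) && (i \in Rs) then a else 0)
          else if i \in S then (if i \in Rs then b else 0)
          else if i \in Rs then c else 1)
 = if (Y \subset S) && (S \subset Rs) then a ^+ #|Y| * b ^+ #|S :\: Y| * c ^+ #|Rs :\: S| else 0.
Proof.
case: ifP => [/andP[YS SR]|H].
  transitivity (\prod_i ((if i \in Y then a else 1) * (if i \in S :\: Y then b else 1)
                  * (if i \in Rs :\: S then c else 1))).
    apply: eq_bigr => i _; rewrite !inE.
    have := fintype.subsetP YS i; have := fintype.subsetP SR i.
    case: (i \in Y); case: (i \in S); case: (i \in Rs) => //= h1 h2;
      rewrite ?mulr1 ?mul1r //.
    all: try by move: (h1 isT).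
    all: try by move: (h2 isT).

  by rewrite !big_split /= !prod_if1.
have [i Hi] : exists i, (i \in Y) && (i \notin S) || (i \in S) && (i \notin Rs).
  move/negbT: H; rewrite negb_and => /orP[/subsetPn[i iY iS]|/subsetPn[i iS iR]].
    by exists i; rewrite iY iS.
  by exists i; rewrite iS iR orbT.
rewrite (bigD1 i) //=.
case/orP: Hi => /andP[h1 /negbTE h2]; rewrite ?h1 ?h2 /= ?mul0r //.
by case: (i \in Y); rewrite /= ?h1 ?h2 /= mul0r.
Qed.

Lemma sum_subsets (K : comPzRingType) (I : finType) (S : {set I}) (a b : K) :
  \sum_(Y : {set I} | Y \subset S) a ^+ #|Y| * b ^+ #|S :\: Y| = (a + b) ^+ #|S|.
Proof.
have := @bigA_distr K 0 1 *%R +%R I (fun i => if i \in S then a else 0) (fun i => if i \in S then b else 1).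
move=> /= E.
transitivity (\prod_i ((if i \in S then a else 0) + (if i \in S then b else 1))); last first.
  by rewrite -prod_if1; apply: eq_bigr => i _; case: (i \in S); rewrite ?add0r.
rewrite E big_mkcond /=; apply: eq_bigr => J _.
have -> : (if J \subset S then a ^+ #|J| * b ^+ #|S :\: J| else 0)
  = if (J \subset S) && (S \subset S) then a ^+ #|J| * b ^+ #|S :\: J| * 1 ^+ #|S :\: S| else 0.
  by rewrite subxx andbT expr1n mulr1.
rewrite -prod_nested; apply: eq_bigr => i _.
by case: (i \in J); case: (i \in S).
Qed.

Lemma sum_bool2 (K : comPzRingType) (f : bool * bool -> K) :
  \sum_(x : bool * bool) f x = f (true,true) + f (true,false) + (f (false,true) + f (false,false)).
Proof.
transitivity (\sum_(p | predT p.1 && predT p.2) f (p.1, p.2)).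
  by apply: eq_bigr => -[].
by rewrite -(pair_big predT predT (fun a b => f (a, b))) /= !big_bool /= addrA.
Qed.

Definition Sv (I : finType) (Rs : {set I}) (v : {ffun I -> bool * bool}) : {set I} :=
  [set i | (i \in Rs) && (v i).2].
Definition Yv (I : finType) (Rs : {set I}) (v : {ffun I -> bool * bool}) : {set I} :=
  [set i | (i \in Rs) && (v i).2 && (v i).1].

Lemma comb (K : comPzRingType) (I : finType) (Rs : {set I}) (w : bool * bool -> K)
  (FF : {set I} -> {set I} -> bool) :
 w (true,true) + w (true,false) + (w (false,true) + w (false,false)) = 1 ->
 \sum_(v : {ffun I -> bool * bool} | FF (Sv Rs v) (Yv Rs v)) \prod_i w (v i) =
 \sum_(S : {set I} | S \subset Rs) \sum_(Y : {set I} | Y \subset S)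
   (if FF S Y then w (true,true) ^+ #|Y| * w (false,true) ^+ #|S :\: Y|
      * (w (true,false) + w (false,false)) ^+ #|Rs :\: S| else 0).
Proof.
move=> w1.
transitivity (\sum_v \sum_(S : {set I}) \sum_(Y : {set I})
   (if (S == Sv Rs v) && (Y == Yv Rs v) && FF S Y then \prod_i w (v i) else 0)).
  rewrite big_mkcond; apply: eq_bigr => v _.
  rewrite (bigD1 (Sv Rs v)) //= [X in _ + X]big1 ?addr0; last first.
    by move=> S SN; apply: big1 => Y _; rewrite (negbTE SN).
  rewrite (bigD1 (Yv Rs v)) //= [X in _ + X]big1 ?addr0; last by move=> Y YN; rewrite (negbTE YN) andbF.
  by rewrite !eqxx.
rewrite exchange_big; under eq_bigr do rewrite exchange_big.
rewrite [RHS]big_mkcond; apply: congr_big => // S _.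
transitivity (\sum_(Y : {set I}) if (Y \subset S) && (S \subset Rs) then
   (if FF S Y then w (true,true) ^+ #|Y| * w (false,true) ^+ #|S :\: Y|
      * (w (true,false) + w (false,false)) ^+ #|Rs :\: S| else 0) else 0); last first.
  case: (S \subset Rs); last by rewrite big1 // => Y; rewrite andbF.
  by rewrite [RHS]big_mkcond; apply: congr_big => // Y _; rewrite andbT.
apply: congr_big => // Y _.
case FSY: (FF S Y); last first.
  by rewrite big1 ?if_same // => v _; rewrite andbF.
rewrite -prod_nested.
set Q := fun (i : I) (x : bool * bool) =>
  ((i \in S) == ((i \in Rs) && x.2)) && ((i \in Y) == ((i \in Rs) && x.2 && x.1)).
transitivity (\prod_i \sum_(x | Q i x) w x); last first.
  apply: eq_bigr => i _; rewrite big_mkcond sum_bool2 /Q /=.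
  by case: (i \in Y); case: (i \in S); case: (i \in Rs); rewrite /= ?addr0 ?add0r.
rewrite (bigA_distr_big_dep Q (fun _ x => w x)) [RHS]big_mkcond; apply: congr_big => // v _. 
rewrite andbT; congr (if _ then _ else _).
apply/andP/familyP => [[/eqP SE /eqP YE] i|H].
  by rewrite /Q SE YE !inE /in_mem /= !eqxx.
split; apply/eqP/setP => i; rewrite inE; have /andP[/eqP h1 /eqP h2] := H i; by [].
Qed.

Lemma card_SA (I : finType) (Rs A : {set I}) (a m : nat) :
  A \subset Rs -> (a <= m)%N ->
  #|[set S : {set I} | (S \subset Rs) && ((#|S :&: A| == a) && (#|S| == m))]| =
  ('C(#|A|, a) * 'C(#|Rs| - #|A|, m - a))%N.
Proof.
move=> AR am.
set D := [set S : {set I} | _].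
pose f (S : {set I}) := (S :&: A, S :\: A).
have finj : injective f.
  by move=> S1 S2 [E1 E2]; rewrite -(setID S1 A) -(setID S2 A) E1 E2.
have <- : (#|[set B : {set I} | B \subset A & #|B| == a]| = 'C(#|A|, a))%N by exact: cards_draws.
have <- : (#|[set B : {set I} | B \subset Rs :\: A & #|B| == m - a]| = 'C(#|Rs| - #|A|, m - a))%N.
  by rewrite cards_draws cardsD (finset.setIidPr AR).
rewrite -cardsX -(card_imset D finj).
apply: eq_card => -[B1 B2]; rewrite [in RHS]inE /= !inE.
apply/imsetP/andP => [[S] | [/andP[B1A /eqP B1a] /andP[B2RA /eqP B2ma]]].
  rewrite inE => /andP[SR /andP[/eqP SAa /eqP Sm]] [-> ->].
  split; apply/andP; split.
  - exact: subsetIr.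
  - by rewrite SAa.
  - exact: finset.setSD.
  - by rewrite cardsD SAa Sm.
exists (B1 :|: B2); last first.
  congr (_, _); apply/setP => x; rewrite !inE;
  have := fintype.subsetP B1A x; have := fintype.subsetP B2RA x; rewrite !inE;
  by case: (x \in B1); case: (x \in B2); case: (x \in A) => //= h1 h2;
     try (by move: (h1 isT)); try (by move: (h2 isT)).
have B12 : B1 :&: B2 = finset.set0.
  apply/setP => x; rewrite !inE;
  have := fintype.subsetP B1A x; have := fintype.subsetP B2RA x; rewrite !inE.
  by case: (x \in B1); case: (x \in B2); case: (x \in A) => //= h1 h2;
     try (by move: (h1 isT)); try (by move: (h2 isT)).
have SA : (B1 :|: B2) :&: A = B1.
  apply/setP => x; rewrite !inE;
  have := fintype.subsetP B1A x; have := fintype.subsetP B2RA x; rewrite !inE.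
  by case: (x \in B1); case: (x \in B2); case: (x \in A) => //= h1 h2;
     try (by move: (h1 isT)); try (by move: (h2 isT)).
rewrite inE SA B1a eqxx /= cardsU B12 cards0 subn0 B1a B2ma subnKC // eqxx andbT.
rewrite finset.subUset (fintype.subset_trans B1A AR) /=.
by apply: fintype.subset_trans B2RA _; exact: subsetDl.
Qed.

Lemma card_SA0 (I : finType) (Rs A : {set I}) (a m : nat) :
  (m < a)%N ->
  #|[set S : {set I} | (S \subset Rs) && ((#|S :&: A| == a) && (#|S| == m))]| = 0%N.
Proof.
move=> ma; apply: eq_card0 => S; rewrite !inE.
apply/negP => /andP[_ /andP[/eqP SA /eqP Sm]].
have := subset_leq_card (subsetIl S A); rewrite SA Sm leqNgt ma //.
Qed.


Lemma joint_count (K : comPzRingType) (I : finType) (Rs A : {set I}) (q1 q0 r : K) (a b m : nat) :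
  \sum_(S : {set I} | S \subset Rs) \sum_(Y : {set I} | Y \subset S)
    (if [&& #|S :&: A| == a, #|Y| == b & #|S| == m]
     then q1 ^+ #|Y| * q0 ^+ #|S :\: Y| * r ^+ #|Rs :\: S| else 0) =
  (#|[set S : {set I} | (S \subset Rs) && ((#|S :&: A| == a) && (#|S| == m))]|
     * 'C(m, b))%:R * (q1 ^+ b * q0 ^+ (m - b) * r ^+ (#|Rs| - m)).
Proof.
transitivity (\sum_(S in [set S : {set I} | (S \subset Rs) && ((#|S :&: A| == a) && (#|S| == m))])
   ('C(m, b)%:R * (q1 ^+ b * q0 ^+ (m - b) * r ^+ (#|Rs| - m))));
  last by rewrite sumr_const natrM; ring.
rewrite [LHS]big_mkcond [RHS]big_mkcond; apply: eq_bigr => S _; rewrite inE.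
case SR: (S \subset Rs) => /=; last by [].
case: (boolP ((#|S :&: A| == a) && (#|S| == m))) => [/andP[/eqP SA /eqP Sm]|H].
  rewrite -[in 'C(m, b)]Sm -(cards_draws S b) mulr_natl -sumr_const [LHS]big_mkcond [RHS]big_mkcond /=.
  apply: eq_bigr => Y _; rewrite !inE SA Sm !eqxx /=.
  case: (boolP (Y \subset S)) => //= YS; case: (boolP (#|Y| == b)) => //= /eqP Yb.
  by rewrite cardsD (finset.setIidPr YS) cardsD (finset.setIidPr SR) Yb Sm.
rewrite big1 //= => Y _.
by move: H; case: (#|S :&: A| == a); case: (#|S| == m); rewrite //= andbF.
Qed.

Lemma N_count (K : comPzRingType) (I : finType) (Rs : {set I}) (q1 q0 r : K) (m : nat) :
  \sum_(S : {set I} | S \subset Rs) \sum_(Y : {set I} | Y \subset S)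
    (if #|S| == m then q1 ^+ #|Y| * q0 ^+ #|S :\: Y| * r ^+ #|Rs :\: S| else 0) =
  ('C(#|Rs|, m))%:R * ((q1 + q0) ^+ m * r ^+ (#|Rs| - m)).
Proof.
rewrite -(cards_draws Rs m) mulr_natl -sumr_const [LHS]big_mkcond [RHS]big_mkcond /=.
apply: eq_bigr => S _; rewrite inE.
case SR: (S \subset Rs) => /=; last by [].
case: (boolP (#|S| == m)) => [/eqP Sm|H]; last by rewrite big1.
rewrite -big_distrl /= sum_subsets cardsD (finset.setIidPr SR) Sm.
by [].
Qed.

End CombS.

Lemma in_set_bool (T : Type) (b : T -> bool) (x : T) : (x \in [set y | b y]) = b x.
Proof. by apply/idP/idP => [/set_mem|/mem_set]. Qed.

Definition FJ (I : finType) (A : {set I}) (a b m : nat) (S Y : {set I}) : bool :=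
  [&& #|S :&: A| == a, #|Y| == b & #|S| == m].
Definition FN (I : finType) (m : nat) (S Y : {set I}) : bool := #|S| == m.

Definition Gf (R : realType) (mu : probability (\bar R * \bar R)%type R) (t : R) (z : bool) : R :=
  fine (mu [set x | (t%:E <= (if z then x.1 else x.2))%E]).

Definition wt (R : realType) (p1 : R) (mu : probability (\bar R * \bar R)%type R) (t : R)
  (x : bool * bool) : R :=
  (if x.1 then p1 else 1 - p1) * (if x.2 then Gf mu t x.1 else 1 - Gf mu t x.1).

Lemma measM (R : realType) (d : measure_display) (Omega : measurableType d)
  (P : probability Omega R) (n : nat) (p1 : R)
  (Z : 'I_n -> Omega -> bool) (C1 C0 : 'I_n -> Omega -> \bar R)
  (mu : probability (\bar R * \bar R)%type R) (t : R) :
  (forall i, measurable_fun setT (Z i)) ->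
  (forall i, measurable_fun setT (fun w => (C1 i w, C0 i w))) ->
  (forall i, P (Z i @^-1` [set true]) = p1%:E) ->
  (forall i (B : set (\bar R * \bar R)), measurable B ->
     P ((fun w => (C1 i w, C0 i w)) @^-1` B) = mu B) ->
  (forall (A : 'I_n -> set bool) (B : 'I_n -> set (\bar R * \bar R)),
     (forall i, measurable (B i)) ->
     P (\bigcap_(i in [set: 'I_n])
          (Z i @^-1` A i `&` (fun w => (C1 i w, C0 i w)) @^-1` B i)) =
     (\prod_(i < n) P (Z i @^-1` A i) *
      \prod_(i < n) P ((fun w => (C1 i w, C0 i w)) @^-1` B i))%E) ->
  forall F : {ffun 'I_n -> bool * bool} -> bool,
  P [set w | F [ffun i => (Z i w, (t%:E <= Cobs Z C1 C0 i w)%E)]] =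
  (\sum_(v | F v) \prod_i wt p1 mu t (v i))%:E.
Proof.
move=> mZ mC PZ PC Ind F.
pose obs w : {ffun 'I_n -> bool * bool} := [ffun i => (Z i w, (t%:E <= Cobs Z C1 C0 i w)%E)].
pose Bs (x : bool * bool) : set (\bar R * \bar R) :=
  [set y | (t%:E <= (if x.1 then y.1 else y.2))%E = x.2].
pose E v := [set w | obs w = v].
have mG : forall z : bool, measurable [set y : \bar R * \bar R | (t%:E <= (if z then y.1 else y.2))%E].
  case.
    have := measurable_fst (T2 := \bar R) measurableT _ (emeasurable_itv `[t%:E, +oo[).
    by rewrite setTI set_itvcy.
  have := measurable_snd (T1 := \bar R) measurableT _ (emeasurable_itv `[t%:E, +oo[).
  by rewrite setTI set_itvcy.
have BsC : forall z, Bs (z, false) = ~` Bs (z, true).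
  move=> z; apply/seteqP; split => y; rewrite /Bs /=; case: (t%:E <= (if z then y.1 else y.2))%E => //.
have mB : forall x, measurable (Bs x).
  move=> [z [|]]; first exact: mG.
  by rewrite BsC; apply: measurableC; exact: mG.
have EI : forall v, E v = \bigcap_(i in [set: 'I_n])
     (Z i @^-1` [set (v i).1] `&` (fun w => (C1 i w, C0 i w)) @^-1` Bs (v i)).
  move=> v; apply/seteqP; split => w /=.
    move=> <- i _; rewrite /= ffunE /=; split => //.
  move=> H; apply/ffunP => i; rewrite ffunE.
  have [/= h1 h2] := H i I; move: h2; rewrite /Bs /Cobs /= h1.
  by case: (v i) => z e /= ->.
have mZb : forall i (b : bool), measurable (Z i @^-1` [set b]).
  by move=> i b; have := mZ i measurableT [set b] I; rewrite setTI.
have mE : forall v, measurable (E v).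
  move=> v; rewrite EI; apply: fin_bigcap_measurable; first exact: finite_finset.
  move=> i _; apply: measurableI; first exact: mZb.
  by have := mC i measurableT _ (mB (v i)); rewrite setTI.
have PZb : forall i (b : bool), P (Z i @^-1` [set b]) = (if b then p1 else 1 - p1)%:E.
  move=> i [|]; first exact: PZ.
  have -> : Z i @^-1` [set false] = ~` (Z i @^-1` [set true]).
    by apply/seteqP; split => w /=; case: (Z i w).
  by rewrite probability_setC ?mZb // PZ EFinB.
have PB : forall x, mu (Bs x) = (if x.2 then Gf mu t x.1 else 1 - Gf mu t x.1)%:E.
  move=> [z [|]] /=.
    by rewrite /Gf fineK // fin_num_measure.
  rewrite BsC probability_setC ?mB // EFinB /Gf fineK // fin_num_measure //.
have PE : forall v, P (E v) = (\prod_i wt p1 mu t (v i))%:E.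
  move=> v; rewrite EI Ind; last by move=> i; exact: mB.
  have -> : (\prod_(i < n) P (Z i @^-1` [set (v i).1]))%E =
     (\prod_(i < n) (if (v i).1 then p1 else 1 - p1)%:E)%E.
    by apply: eq_bigr => i _; exact: PZb.
  have -> : (\prod_(i < n) P ((fun w => (C1 i w, C0 i w)) @^-1` Bs (v i)))%E =
     (\prod_(i < n) (if (v i).2 then Gf mu t (v i).1 else 1 - Gf mu t (v i).1)%:E)%E.
    by apply: eq_bigr => i _; rewrite -PB; exact: PC.
  by rewrite !prodEFin -EFinM -big_split.
have Eset : [set w | F (obs w)] = \bigcup_(v in [set v | F v]) E v.
  apply/seteqP; split => w; first by move=> Fw; exists (obs w).
  move=> [v Fv Ew]; change (F (obs w)); by rewrite Ew.
change (P [set w | F (obs w)] = (\sum_(v | F v) \prod_i wt p1 mu t (v i))%:E).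
rewrite Eset measure_fin_bigcup.
all: try exact: finite_finset.
all: try (by move=> v _; exact: mE).
all: try (by move=> v1 v2 _ _ [w [E1 E2]]; rewrite -E1 -E2).
rewrite (fsbigE (enum [pred v | F v])).
- transitivity (\sum_(v <- enum [pred v | F v] | v \in [set v | F v])
     (\prod_i wt p1 mu t (v i))%:E).
    by apply: eq_bigr => v _; exact: PE.
  rewrite sumEFin; congr (_%:E).
  rewrite big_enum_cond /=; apply: eq_bigl => v; rewrite !inE /=.
  by case Fv: (F v) => //=; apply/mem_set.
- exact: enum_uniq.
- by move=> v /=; rewrite mem_enum.
- by move=> v /= Fv; rewrite mem_enum inE Fv.
Qed.

Lemma binpart (R : realType) (q1 q0 : R) (b m : nat) :
  0 <= q1 -> 0 <= q0 ->
  'C(m, b)%:R * (q1 ^+ b * q0 ^+ (m - b)) =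
  (q1 + q0) ^+ m * binomial_pmf m (q1 / (q1 + q0)) b.
Proof.
move=> h1 h0; rewrite /binomial_pmf /unstable.onem.
case: (leqP b m) => bm; last by rewrite bin_small // !mulr0n mul0r mulr0.
rewrite -(subnKC bm); set e := (m - b)%N; rewrite addKn.
have [q0E|qn0] := eqVneq (q1 + q0) 0.
  have : q1 = 0 /\ q0 = 0.
    by move/eqP: q0E; rewrite paddr_eq0 // => /andP[/eqP -> /eqP ->].
  case=> -> ->; rewrite !mul0r subr0 expr1n mulr1 !expr0n addr0.
  case: b {bm} e => [|b] [|e] //=; rewrite ?add0n ?addSn ?addnS ?expr0n //= ?mul0r ?mulr0 ?mulr1 ?mul1r ?mulr0n //.
have -> : 1 - q1 / (q1 + q0) = q0 / (q1 + q0).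
  by apply: (mulfI qn0); rewrite mulrBr mulr1 !mulrA !(mulrC (q1 + q0)) !mulfK //; ring.
rewrite !expr_div_n exprD -mulr_natl.
have hb : (q1 + q0) ^+ b != 0 by exact: expf_neq0.
have he : (q1 + q0) ^+ e != 0 by exact: expf_neq0.
by field; rewrite hb he.
Qed.

Lemma final_alg (R : realType) (q1 q0 r : R) (nk dk a b m cnt : nat) :
  0 <= q1 -> 0 <= q0 -> (dk <= nk)%N ->
  cnt = (if (a <= m)%N then 'C(dk, a) * 'C(nk - dk, m - a) else 0)%N ->
  (cnt * 'C(m, b))%:R * (q1 ^+ b * q0 ^+ (m - b) * r ^+ (nk - m)) =
  'C(nk, m)%:R * ((q1 + q0) ^+ m * r ^+ (nk - m)) *
  (hgeom_pmf nk dk m a * binomial_pmf m (q1 / (q1 + q0)) b).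
Proof.
move=> h1 h0 dn ->; rewrite /hgeom_pmf.
case: (leqP a m) => am; last by rewrite !mul0n !mul0r mulr0.
case: (leqP m nk) => mn; last first.
  rewrite (bin_small mn) !mul0r.
  have -> : ('C(dk, a) * 'C(nk - dk, m - a))%N = 0%N.
    case: (leqP a dk) => ad; last by rewrite bin_small.
    by rewrite (@bin_small (nk - dk)) ?muln0 //; lia.
  by rewrite !mul0n mul0r.
have cn : 'C(nk, m)%:R != 0 :> R by rewrite pnatr_eq0 -lt0n bin_gt0.
set X := ('C(dk, a) * 'C(nk - dk, m - a))%N.
transitivity (X%:R * r ^+ (nk - m) * ('C(m, b)%:R * (q1 ^+ b * q0 ^+ (m - b)))).
  by rewrite natrM; ring.
rewrite binpart //.
by field.
Qed.

Theorem lemmaA3 (R : realType) (d : measure_display) (Omega : measurableType d)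
  (P : probability Omega R) (n : nat) (p1 : R)
  (T1 T0 : 'I_n -> R) (Z : 'I_n -> Omega -> bool) (C1 C0 : 'I_n -> Omega -> \bar R)
  (mu : probability (\bar R * \bar R)%type R) :
  0 < p1 < 1 ->
  (forall i, 0 <= T1 i) -> (forall i, 0 <= T0 i) ->
  (forall i w, (0 <= C1 i w)%E) -> (forall i w, (0 <= C0 i w)%E) ->
  (forall i, measurable_fun setT (Z i)) ->
  (forall i, measurable_fun setT (fun w => (C1 i w, C0 i w))) ->
  (* Assumption 1: Z_i i.i.d. Bernoulli(p1) *)
  (forall i, P (Z i @^-1` [set true]) = p1%:E) ->
  (* Assumption 2: the pairs (C_i(1), C_i(0)) are i.i.d. with common law mu *)
  (forall i (B : set (\bar R * \bar R)), measurable B ->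
     P ((fun w => (C1 i w, C0 i w)) @^-1` B) = mu B) ->
  (* Assumptions 1-2 (independence): Z_1..Z_n, (C_1(1),C_1(0)),..,(C_n(1),C_n(0))
     are mutually independent *)
  (forall (A : 'I_n -> set bool) (B : 'I_n -> set (\bar R * \bar R)),
     (forall i, measurable (B i)) ->
     P (\bigcap_(i in [set: 'I_n])
          (Z i @^-1` A i `&` (fun w => (C1 i w, C0 i w)) @^-1` B i)) =
     (\prod_(i < n) P (Z i @^-1` A i) *
      \prod_(i < n) P ((fun w => (C1 i w, C0 i w)) @^-1` B i))%E) ->
  (* null hypothesis *)
  (forall i, T1 i = T0 i) ->
  forall k : 'I_(nK T0),
  let t := tk T0 k in
  let G1 := fine (mu [set x | (t%:E <= x.1)%E]) in
  let G0 := fine (mu [set x | (t%:E <= x.2)%E]) in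
  let phi := p1 * G1 / (p1 * G1 + (1 - p1) * G0) in
  forall a b m : nat,
  P [set w | [/\ Dnum T1 T0 Z C1 C0 t w = a, N1 T1 T0 Z C1 C0 t w = b
                & Nall T1 T0 Z C1 C0 t w = m]] =
  (P [set w | Nall T1 T0 Z C1 C0 t w = m] *
   (hgeom_pmf (nk T0 k) (dk T0 k) m a * binomial_pmf m phi b)%:E)%E.
Proof.
move=> hp T1ge0 T0ge0 C1ge0 C0ge0 mZ mC PZ PC Ind H0 k t G1 G0 phi a b m.
pose Rs := [set i : 'I_n | t <= T0 i]%SET.
pose A := [set i : 'I_n | T0 i == t]%SET.
pose obs w : {ffun 'I_n -> bool * bool} := [ffun i => (Z i w, (t%:E <= Cobs Z C1 C0 i w)%E)].
have hTobs : forall i w, Tobs T1 T0 Z i w = T0 i by move=> i w; rewrite /Tobs H0 if_same.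
have hN : forall w, Nall T1 T0 Z C1 C0 t w = #|Sv Rs (obs w)|.
  move=> w; apply: eq_card => i; rewrite in_set_bool /Sv !inE ffunE /= /Wobs hTobs le_min lee_fin.
  by [].
have hN1 : forall w, N1 T1 T0 Z C1 C0 t w = #|Yv Rs (obs w)|.
  move=> w; apply: eq_card => i; rewrite in_set_bool /Yv !inE ffunE /= /Wobs hTobs le_min lee_fin.
  by case: (Z i w); rewrite ?andbT ?andbF.
have hD : forall w, Dnum T1 T0 Z C1 C0 t w = #|Sv Rs (obs w) :&: A|.
  move=> w; apply: eq_card => i; rewrite in_set_bool /Sv !inE ffunE /= /Delta /Wobs hTobs.
  case: (eqVneq (T0 i) t) => [->|ne]; rewrite ?lexx /= ?andbT ?andbF.
    case: (boolP (t%:E <= Cobs Z C1 C0 i w)%E) => h /=; last by [].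
    by rewrite min_l // eqxx.
  case: (boolP ((T0 i)%:E <= Cobs Z C1 C0 i w)%E) => h //=.
  by rewrite min_l // eqe (negbTE ne).
have EJ : [set w | [/\ Dnum T1 T0 Z C1 C0 t w = a, N1 T1 T0 Z C1 C0 t w = b
                & Nall T1 T0 Z C1 C0 t w = m]] =
   [set w | FJ A a b m (Sv Rs (obs w)) (Yv Rs (obs w))].
  apply/seteqP; split => w; rewrite /= hD hN1 hN /FJ.
    by case=> -> -> ->; rewrite !eqxx.
  by case/and3P => /eqP -> /eqP -> /eqP ->.
have EN : [set w | Nall T1 T0 Z C1 C0 t w = m] =
   [set w | FN m (Sv Rs (obs w)) (Yv Rs (obs w))].
  apply/seteqP; split => w; rewrite /= hN /FN.
    by move=> ->.
  by move/eqP.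
have w1 : wt p1 mu t (true, true) + wt p1 mu t (true, false) +
   (wt p1 mu t (false, true) + wt p1 mu t (false, false)) = 1.
  by rewrite /wt /=; ring.
rewrite EJ EN (measM t mZ mC PZ PC Ind (fun v => FJ A a b m (Sv Rs v) (Yv Rs v))).
rewrite (measM t mZ mC PZ PC Ind (fun v => FN m (Sv Rs v) (Yv Rs v))).
rewrite !comb // /FJ /FN joint_count N_count.
rewrite -EFinM; congr (_%:E).
have Gge : forall z, 0 <= Gf mu t z.
  by move=> z; apply: fine_ge0; exact: measure_ge0.
have [p1ge p1le] : 0 <= p1 /\ 0 <= 1 - p1.
  by case/andP: hp => h0 h1; split; [exact: ltW | rewrite subr_ge0; exact: ltW].
have AR : A \subset Rs.
  by apply/fintype.subsetP => i; rewrite !inE => /eqP ->.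
have nkE : nk T0 k = #|Rs| by apply: eq_card => i; rewrite in_set_bool inE.
have dkE : dk T0 k = #|A| by apply: eq_card => i; rewrite in_set_bool inE.
rewrite nkE dkE.
rewrite -[phi]/(wt p1 mu t (true, true) / (wt p1 mu t (true, true) + wt p1 mu t (false, true))).
apply: final_alg.
- by rewrite /wt /=; apply: mulr_ge0.
- by rewrite /wt /=; apply: mulr_ge0.
- exact: subset_leq_card AR.
- case: leqP => am; first exact: card_SA.
  exact: card_SA0.
Qed.
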